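(* Let $n\geq 1$ with $n\not\equiv 2\pmod 4$. Then for every $i\in[n]$, $\Lambda(n,i)=\Lambda(n,n-i+1)$.
   Context: $\mathcal C_n^{+-}$ is the set of cyclic permutations $\pi=\pi_1\cdots\pi_n$ of $[n]$ (those consisting of a single $n$-cycle) that are unimodal, i.e. for which there is $e\in\{0,\dots,n\}$ with $\pi_1\cdots\pi_e$ increasing and $\pi_{e+1}\cdots\pi_n$ decreasing. $\Lambda(n,i)$ is the number of $\pi\in\mathcal C_n^{+-}$ with $\pi_i=n$. *)

(* Defs.v *)
From mathcomp Require Import all_boot all_fingroup.
Set Implicit Arguments. Unset Strict Implicit. Unset Printing Implicit Defensive.

(* A permutation pi = pi_1 ... pi_n of [n] is encoded as s : {perm 'I_n},
   with pi_(j+1) = (s j) + 1 (0-based positions and values). *)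

Definition cyclic_perm n (s : {perm 'I_n}) : bool := #|porbits s| == 1.

Definition unimodal n (s : {perm 'I_n}) : bool :=
  [exists e : 'I_n.+1, forall j : 'I_n, forall k : 'I_n,
     (j < k) ==> ((k < e) ==> (s j < s k)) && ((e <= j) ==> (s k < s j))].

Definition Lambda n i : nat :=
  #|[set s : {perm 'I_n} | [&& cyclic_perm s, unimodal s &
       [exists j : 'I_n, (val j == i.-1) && (val (s j) == n.-1)]]]|.

(* Main.v *)
Require Import Defs.
From mathcomp Require Import all_boot all_fingroup zify.
Set Implicit Arguments. Unset Strict Implicit. Unset Printing Implicit Defensive.

Fixpoint twlt (L : nat) (a b : nat -> bool) : bool :=
  if L is L'.+1 then
    if a 0 == b 0 then
      (if a 0 then twlt L' (fun k => b k.+1) (fun k => a k.+1)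
       else twlt L' (fun k => a k.+1) (fun k => b k.+1))
    else b 0
  else false.

Lemma twlt_ext L a a' b b' :
  (forall k, k < L -> a k = a' k) -> (forall k, k < L -> b k = b' k) ->
  twlt L a b = twlt L a' b'.
Proof.
elim: L a a' b b' => [//|L IH] a a' b b' Ha Hb /=.
rewrite -Ha // -Hb //.
case: ifP => _; last by [].
case: (a 0).
  by apply: IH => k Hk; [apply: Hb | apply: Ha].
by apply: IH => k Hk; [apply: Ha | apply: Hb].
Qed.

Lemma twlt_eq L a b : (forall k, k < L -> a k = b k) -> twlt L a b = false.
Proof.
elim: L a b => [//|L IH] a b H /=.
rewrite H // eqxx; case: (b 0); apply: IH => k Hk; rewrite H //.
Qed.

Lemma twlt_asym L a b : twlt L a b -> ~~ twlt L b a.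
Proof.
elim: L a b => [//|L IH] a b /=.
rewrite eq_sym; case: eqP => [E|].
  rewrite E; case: (a 0) => H; exact: IH.
by case: (a 0); case: (b 0).
Qed.

Lemma twlt_irr L a : twlt L a a = false.
Proof. by apply: twlt_eq. Qed.

Lemma twlt_trans L a b c : twlt L a b -> twlt L b c -> twlt L a c.
Proof.
elim: L a b c => [//|L IH] a b c /=.
case: (a 0) (b 0) (c 0) => [] [] [] //=.
- by move=> H1 H2; apply: (IH _ _ _ H2 H1).
- by move=> H1 H2; apply: (IH _ _ _ H1 H2).
Qed.

Lemma twlt_total L a b : ~~ twlt L a b -> ~~ twlt L b a ->
  forall k, k < L -> a k = b k.
Proof.
elim: L a b => [//|L IH] a b /=.
rewrite (eq_sym (b 0)).
case E: (a 0 == b 0); last by case: (a 0) (b 0) E => [] [].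
move/eqP: E => E; rewrite E.
case: (b 0) => H1 H2 [|k] Hk //.
- by rewrite (IH _ _ H2 H1 k).
- by rewrite (IH _ _ H1 H2 k).
Qed.

Lemma twlt_S L a b : a L = b L -> twlt L.+1 a b = twlt L a b.
Proof.
elim: L a b => [|L IH] a b H.
  by rewrite /= H eqxx; case: (b 0).
rewrite [LHS]/= [RHS]/=; case: ifP => // _.
case: (a 0); apply: IH => //.
Qed.
Section Cyc.
Variable m : nat.
Local Notation n := m.+1.
Implicit Types (s : {perm 'I_n}) (x y p : 'I_n).

Lemma cyc_mem s x y : cyclic_perm s -> y \in porbit s x.
Proof.
move=> /cards1P[P HP].
have Hx : porbit s x \in porbits s by apply: imset_f.
have Hy : porbit s y \in porbits s by apply: imset_f.
rewrite HP !inE in Hx Hy.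
by rewrite (eqP Hx) -(eqP Hy) porbit_id.
Qed.

Lemma cyc_card s x : cyclic_perm s -> #|porbit s x| = n.
Proof.
move=> Hc; have -> : porbit s x = [set: 'I_n].
  by apply/setP => y; rewrite inE (cyc_mem _ _ Hc).
by rewrite cardsT card_ord.
Qed.

Lemma cyc_expn s x : cyclic_perm s -> (s ^+ n)%g x = x.
Proof. by move=> Hc; have := iter_porbit s x; rewrite (cyc_card x Hc) permX. Qed.

Lemma cyc_expmod s x (k : nat) : cyclic_perm s -> (s ^+ (k %% n))%g x = (s ^+ k)%g x.
Proof.
move=> Hc; rewrite {2}(divn_eq k n) expgD mulnC expgM permM.
elim: (k %/ n) => [|q IH]; first by rewrite expg0 perm1.
by rewrite expgS permM cyc_expn.
Qed.

Lemma cyc_inj s x i j : cyclic_perm s -> i < n -> j < n ->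
  (s ^+ i)%g x = (s ^+ j)%g x -> i = j.
Proof.
move=> Hc Hi Hj E.
have U := uniq_traject_porbit s x; rewrite (cyc_card x Hc) in U.
apply/eqP; rewrite -(nth_uniq x _ _ U) ?size_traject //.
by rewrite !nth_traject // -!permX E.
Qed.

Lemma cyc_surj s x y : cyclic_perm s -> exists2 i, i < n & y = (s ^+ i)%g x.
Proof.
move=> Hc; have /porbitP[i ->] := cyc_mem x y Hc.
by exists (i %% n); rewrite ?ltn_mod ?cyc_expmod.
Qed.

Lemma cyc_fromP s x : (forall y, y \in porbit s x) -> cyclic_perm s.
Proof.
move=> H; apply/cards1P; exists (porbit s x).
apply/setP => P; rewrite inE; apply/imsetP/eqP => [[y _ ->]|->].
  by apply/eqP; rewrite eq_porbit_mem.
by exists x.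
Qed.


Definition unib s (e : nat) : bool :=
  [forall j : 'I_n, forall k : 'I_n,
     (j < k) ==> ((k < e) ==> (s j < s k)) && ((e <= j) ==> (s k < s j))].

Lemma unibP s e (j k : 'I_n) : unib s e -> j < k ->
  (k < e -> s j < s k) /\ (e <= j -> s k < s j).
Proof.
move=> /forallP/(_ j)/forallP/(_ k) H Hjk; rewrite Hjk /= in H.
by case/andP: H => /implyP H1 /implyP H2.
Qed.

Lemma unimodalE s : unimodal s = [exists e : 'I_n.+1, unib s e].
Proof. by []. Qed.

Definition itin s (e : nat) x : nat -> bool := fun (k : nat) => e <= (s ^+ k)%g x.

Lemma itinS s e x (k : nat) : itin s e x k.+1 = itin s e (s x) k.
Proof. by rewrite /itin expgS permM. Qed.

Lemma lemA s e : unib s e -> forall L x y, x < y ->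
  twlt L (itin s e x) (itin s e y) \/
  (forall k, k < L -> itin s e x k = itin s e y k).
Proof.
move=> Hu; elim=> [|L IH] x y Hxy; first by right.
have Hx : itin s e x 0 = (e <= x) by rewrite /itin expg0 perm1.
have Hy : itin s e y 0 = (e <= y) by rewrite /itin expg0 perm1.
rewrite /= Hx Hy.
case: (leqP e x) => Hex; case: (leqP e y) => Hey /=.
- have [_ /(_ Hex) H] := unibP Hu Hxy.
  case: (IH _ _ H) => [H1|H1]; [left|right].
    by rewrite (@twlt_ext L _ (itin s e (s y)) _ (itin s e (s x))) // => k _; rewrite itinS.
  case=> [|k] Hk; first by rewrite Hx Hy Hex Hey.
  by rewrite !itinS H1.
- lia.
- by left.
- have [/(_ Hey) H _] := unibP Hu Hxy.
  case: (IH _ _ H) => [H1|H1]; [left|right].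
    by rewrite (@twlt_ext L _ (itin s e (s x)) _ (itin s e (s y))) // => k _; rewrite itinS.
  case=> [|k] Hk; first by rewrite Hx Hy; case: leqP Hex; case: leqP Hey.
  by rewrite !itinS H1.
Qed.

Lemma step1 s e x y : unib s e -> x != y -> (e <= x) = (e <= y) ->
  (s x < s y) = ((x < y) (+) (e <= x)).
Proof.
move=> Hu Hne Hl.
case: (ltngtP x y) => H; last by rewrite (val_inj H) eqxx in Hne.
- have [H1 H2] := unibP Hu H.
  case: (leqP e x) => Hex /=.
    by apply/negbTE; rewrite -leqNgt ltnW // H2.
  by rewrite H1 // ltnNge -Hl -ltnNge.
- have [H1 H2] := unibP Hu H.
  case: (leqP e x) => Hex /=.
    by rewrite H2 // -Hl.
  by apply/negbTE; rewrite -leqNgt ltnW // H1.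
Qed.

Implicit Types (w : {ffun 'I_n -> bool}).

Definition W w (k : nat) : bool := w (inord (k %% n)).

Lemma W_ord w (i : 'I_n) : W w i = w i.
Proof. by rewrite /W modn_small // inord_val. Qed.

Lemma W_mod w k : W w (k %% n) = W w k.
Proof. by rewrite /W modn_mod. Qed.

Lemma W_n w k : W w (k + n) = W w k.
Proof. by rewrite /W modnDr. Qed.

Lemma W_addmod w a b : W w (a + b %% n) = W w (a + b).
Proof. by rewrite -W_mod modnDmr W_mod. Qed.

Definition isper w D := [forall i : 'I_n, W w (i + D) == w i].

Lemma isperP w D : isper w D -> forall k, W w (k + D) = W w k.
Proof.
move=> /forallP H k.
have Hk : k %% n < n by rewrite ltn_mod.
have := eqP (H (Ordinal Hk)); rewrite -W_ord /= => E.
by rewrite -W_mod -modnDml W_mod E W_mod.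
Qed.

Lemma isper_intro w D : (forall k, W w (k + D) = W w k) -> isper w D.
Proof. by move=> H; apply/forallP => i; rewrite H W_ord. Qed.

Lemma isperM w D : isper w D -> forall q k, W w (k + q * D) = W w k.
Proof.
move=> H; elim=> [|q IH] k; first by rewrite addn0.
by rewrite mulSn addnA IH (isperP H).
Qed.

Lemma isper_n w : isper w n.
Proof. by apply: isper_intro => k; rewrite W_n. Qed.

Definition per w := (find (isper w) (iota 1 n)).+1.

Lemma has_per w : has (isper w) (iota 1 n).
Proof.
by apply/hasP; exists n; rewrite ?isper_n // mem_iota; apply/andP; split.
Qed.

Lemma per_le w : per w <= n.
Proof. by have := has_per w; rewrite has_find size_iota. Qed.

Lemma per_gt0 w : 0 < per w.
Proof. by []. Qed.

Lemma per_isper w : isper w (per w).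
Proof.
have := nth_find 0 (has_per w).
rewrite nth_iota ?add1n //.
by have := has_per w; rewrite has_find size_iota.
Qed.

Lemma per_min w D : 0 < D -> D < per w -> ~~ isper w D.
Proof.
move=> H0 H1.
have := @before_find _ 0 (isper w) (iota 1 n) D.-1.
rewrite nth_iota; last by have := per_le w; rewrite /per in H1 *; lia.
rewrite add1n prednK // => ->; rewrite /per in H1; lia.
Qed.

Lemma per_dvd w D : isper w D -> per w %| D.
Proof.
move=> H.
have Hr : isper w (D %% per w).
  apply: isper_intro => k.
  rewrite -(isperM (per_isper w) (D %/ per w) (k + D %% per w)) -addnA (addnC (D %% per w)) -divn_eq.
  exact: isperP.
have [E|Hpos] := posnP (D %% per w); first by apply/eqP.
by have := per_min Hpos (ltn_pmod D (per_gt0 w)); rewrite Hr.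
Qed.

Definition negw w : {ffun 'I_n -> bool} := [ffun i => ~~ w i].

Lemma W_neg w k : W (negw w) k = ~~ W w k.
Proof. by rewrite /W ffunE. Qed.

Lemma negwK : involutive negw.
Proof. by move=> w; apply/ffunP => i; rewrite !ffunE negbK. Qed.

Lemma isper_neg w D : isper (negw w) D = isper w D.
Proof.
apply/forallP/forallP => H i; have := H i; rewrite W_neg ffunE.
  by rewrite eqb_negLR negbK.
by move=> /eqP ->.
Qed.

Lemma per_neg w : per (negw w) = per w.
Proof. by rewrite /per (eq_find (isper_neg w)). Qed.

Definition zeros w := #|[set i | ~~ w i]|.

Lemma zeros_neg w : zeros (negw w) = n - zeros w.
Proof.
rewrite /zeros; have := cardsC [set i | ~~ w i]; rewrite card_ord => E.
have -> : [set i | ~~ negw w i] = ~: [set i | ~~ w i].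
  by apply/setP => i; rewrite !inE ffunE.
lia.
Qed.

Lemma zeros_le w : zeros w <= n.
Proof. by have := max_card [set i | ~~ w i]; rewrite card_ord. Qed.

Definition blk w := \sum_(k < per w) W w k.
Definition uu w := ((per w).*2 == n) && odd (blk w).
Definition g w := if per w == n then 1 else if uu w then 2 else 0.

Lemma sumb_le D (f : nat -> bool) : \sum_(k < D) f k <= D.
Proof.
elim: D => [|D IH]; first by rewrite big_ord0.
by rewrite big_ord_recr /= -addn1 leq_add //; case: (f D).
Qed.

Lemma sum_neg w D : \sum_(k < D) W (negw w) k = D - \sum_(k < D) W w k.
Proof.
elim: D => [|D IH]; first by rewrite !big_ord0.
rewrite !big_ord_recr /= IH W_neg.
have := sumb_le D (W w).
by case: (W w D) => /=; lia.
Qed.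

Lemma uu_neg w : n %% 4 != 2 -> uu (negw w) = uu w.
Proof.
move=> Hn; rewrite /uu per_neg.
case E: ((per w).*2 == n) => //=.
rewrite /blk per_neg sum_neg.
have He : ~~ odd (per w).
  apply/negP => Ho; move/eqP: E; rewrite -(odd_double_half (per w)) Ho.
  rewrite -!muln2 => E'; move: Hn; rewrite -E'; lia.
have := sumb_le (per w) (W w).
move=> Hle; rewrite oddB // (negbTE He) /=; by [].
Qed.

Lemma g_neg w : n %% 4 != 2 -> g (negw w) = g w.
Proof. by move=> Hn; rewrite /g per_neg uu_neg. Qed.

Definition wordOf s (e : nat) p : {ffun 'I_n -> bool} :=
  [ffun k : 'I_n => e <= (s ^+ k)%g p].

Lemma W_wordOf s e p (k : nat) : cyclic_perm s ->
  W (wordOf s e p) k = (e <= (s ^+ k)%g p).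
Proof.
move=> Hc; rewrite /W ffunE inordK ?ltn_mod // cyc_expmod //.
Qed.

Lemma itin_word s e p (t k : nat) : cyclic_perm s ->
  itin s e ((s ^+ t)%g p) k = W (wordOf s e p) (t + k).
Proof. by move=> Hc; rewrite W_wordOf // /itin expgD permM. Qed.

Lemma card_ltord (c : nat) : c <= n -> #|[set y : 'I_n | y < c]| = c.
Proof.
elim: c => [|c IH] Hc.
  by apply/eqP; rewrite eqn0Ngt card_gt0; apply/negP => /set0Pn[y]; rewrite inE.
have Hc' : c < n by [].
have -> : [set y : 'I_n | y < c.+1] = Ordinal Hc' |: [set y : 'I_n | y < c].
  by apply/setP => y; rewrite !inE ltnS leq_eqVlt -val_eqE.
by rewrite cardsU1 inE ltnn IH // ltnW.
Qed.

Lemma card_ltperm (X : {perm 'I_n}) (c : nat) : c <= n ->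
  #|[set u | X u < c]| = c.
Proof.
move=> Hc; rewrite -[in RHS](card_ltord Hc) -(card_imset _ (@perm_inj _ X)).
apply: eq_card => y; rewrite inE.
apply/imsetP/idP => [[u]|Hy]; first by rewrite inE => H ->.
by exists (X^-1%g y); rewrite ?inE permKV.
Qed.

Lemma orb_inj s p : cyclic_perm s -> injective (fun k : 'I_n => (s ^+ k)%g p).
Proof. by move=> Hc i j /(cyc_inj Hc (ltn_ord i) (ltn_ord j)) /val_inj. Qed.

Definition orbP s p (Hc : cyclic_perm s) : {perm 'I_n} := perm (@orb_inj s p Hc).

Lemma orbPE s p (Hc : cyclic_perm s) k : orbP p Hc k = (s ^+ k)%g p.
Proof. by rewrite permE. Qed.

Lemma zeros_word s e p : cyclic_perm s -> e <= n -> zeros (wordOf s e p) = e.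
Proof.
move=> Hc He; rewrite /zeros -[in RHS](card_ltperm (orbP p Hc) He).
by apply: eq_card => k; rewrite !inE ffunE orbPE -ltnNge.
Qed.

Lemma chain_lt (f : nat -> nat) : (forall j, f j < f j.+1) -> forall j, f 0 < f j.+1.
Proof. by move=> H; elim=> [|j IH] //; apply: ltn_trans IH (H _). Qed.

Lemma chain s e p D : cyclic_perm s -> unib s e -> 0 < D ->
  isper (wordOf s e p) D -> ~~ odd (\sum_(k < D) W (wordOf s e p) k) -> n %| D.
Proof.
move=> Hc Hu HD Hp Hev; apply/negP => Hnd.
set w := wordOf s e p in Hp Hev.
have Hne : forall u, (s ^+ u)%g p != (s ^+ (u + D))%g p.
  move=> u; apply/negP => /eqP E.
  have E' : (s ^+ (u %% n))%g p = (s ^+ ((u + D) %% n))%g p by rewrite !cyc_expmod.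
  have := cyc_inj Hc (ltn_mod u n) (ltn_mod (u + D) n) E'.
  move/eqP; rewrite -{1}[u]addn0 eqn_modDl mod0n eq_sym => /eqP H0.
  by move: Hnd; rewrite /dvdn H0.
have Hx : forall u, (e <= (s ^+ u)%g p) = W w u by move=> u; rewrite W_wordOf.
pose B u := (s ^+ u)%g p < (s ^+ (u + D))%g p.
have Brec : forall u, B u.+1 = B u (+) W w u.
  move=> u; rewrite /B addSn !expgSr !permM (step1 Hu) //.
    by rewrite Hx.
  by rewrite !Hx (isperP Hp).
have Bk : forall u k, B (u + k) = B u (+) odd (\sum_(i < k) W w (u + i)).
  move=> u; elim=> [|k IH]; first by rewrite addn0 big_ord0 addbF.
  by rewrite addnS Brec IH big_ord_recr /= oddD addbA oddb.
have BD : forall j, B (j * D) = B 0.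
  elim=> [|j IH] //; rewrite mulSn addnC Bk IH.
  have -> : \sum_(i < D) W w (j * D + i) = \sum_(i < D) W w i.
    by apply: eq_bigr => i _; rewrite addnC isperM.
  by rewrite (negbTE Hev) addbF.
have Hxn : (s ^+ (n * D))%g p = p.
  by rewrite -cyc_expmod // mulnC modnMl expg0 perm1.
case HB0 : (B 0).
  have := @chain_lt (fun j => (s ^+ (j * D))%g p) => /(_ _ m).
  rewrite mul0n Hxn expg0 perm1 ltnn => H; suff: false by []; apply: H => j.
  by have := BD j; rewrite HB0 /B mulSn addnC.
have := @chain_lt (fun j => n - (s ^+ (j * D))%g p) => /(_ _ m).
rewrite mul0n Hxn expg0 perm1 ltnn => H; suff: false by []; apply: H => j.
have := BD j; rewrite HB0 /B => /negbT; rewrite (addnC (j * D) D) => H1.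
have := Hne (j * D); rewrite (addnC (j * D) D) -val_eqE /= => H2.
rewrite mulSn.
have : (s ^+ (D + j * D))%g p < n by [].
lia.
Qed.

Definition good w := (per w == n) || uu w.

Lemma sum_dbl w d : isper w d -> \sum_(k < d + d) W w k = (\sum_(k < d) W w k).*2.
Proof.
move=> Hp; rewrite big_split_ord /= -addnn; congr (_ + _).
by apply: eq_bigr => i _; rewrite addnC (isperP Hp).
Qed.

Lemma good_of s e p : cyclic_perm s -> unib s e -> good (wordOf s e p).
Proof.
move=> Hc Hu; set w := wordOf s e p; rewrite /good /uu.
have Hd := per_isper w; have Hle := per_le w; have H0 := per_gt0 w.
case Ho : (odd (blk w)).
  have Hp2 : isper w (per w + per w).
    by apply: isper_intro => k; rewrite addnA !(isperP Hd).
  have := chain Hc Hu _ Hp2; rewrite sum_dbl // odd_double => /(_ isT isT) Hdv.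
  case/dvdnP: Hdv => q Hq.
  have Hq2 : q * n <= 2 * n by lia.
  rewrite leq_pmul2r // in Hq2.
  case: q Hq Hq2 => [|[|[|q]]] Hq Hq2 //.
  all: try first [by move: Hq Hq2 H0; lia | by apply/orP; right; rewrite andbT -addnn; apply/eqP; lia | by apply/orP; left; apply/eqP; lia].
have := chain Hc Hu H0 Hd; rewrite /blk in Ho; rewrite Ho => /(_ isT) Hdv.
by rewrite eqn_leq Hle dvdn_leq.
Qed.

Definition I w (t : nat) : nat -> bool := fun k => W w (t + k).
Definition eqIb w (u t : 'I_n) := [forall k : 'I_n, W w (u + k) == W w (t + k)].
Definition par w (t : nat) := odd (\sum_(k < t) W w k).
Definition ltc w (c : bool) (u t : 'I_n) : bool :=
  twlt n (I w u) (I w t) || [&& eqIb w u t, u != t & c (+) par w u].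

Lemma eqIb_all w u t : eqIb w u t -> forall k, W w (u + k) = W w (t + k).
Proof.
move=> /forallP H k; rewrite -W_addmod -[in RHS]W_addmod.
exact: (eqP (H (Ordinal (ltn_mod k n)))).
Qed.

Lemma eqIb_sym w u t : eqIb w u t -> eqIb w t u.
Proof. by move=> /forallP H; apply/forallP => k; rewrite eq_sym H. Qed.

Lemma eqIb_twlt w u t : eqIb w u t -> twlt n (I w u) (I w t) = false.
Proof. by move=> H; apply: twlt_eq => k _; rewrite /I (eqIb_all H). Qed.

Lemma eqI_per w (u t : 'I_n) : u < t -> eqIb w u t -> isper w (t - u).
Proof.
move=> Hut H; apply: isper_intro => i.
have Hu := ltn_ord u; have Ht := ltn_ord t.
have := eqIb_all H (i + n - u).
have -> : u + (i + n - u) = i + n by lia.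
have -> : t + (i + n - u) = i + (t - u) + n by lia.
by rewrite !W_n.
Qed.

Lemma tie_uu w (u t : 'I_n) : good w -> eqIb w u t -> u < t ->
  uu w /\ (t : nat) = u + per w.
Proof.
move=> Hg H Hut; have /dvdnP[q Hq] := per_dvd (eqI_per Hut H).
have Ht : t < n by [].
move: Hg; rewrite /good /uu.
case: eqP => [E|_] /=.
  by exfalso; rewrite E in Hq; case: q Hq => [|q] Hq; lia.
case/andP => /eqP E Ho; split; first by rewrite /uu -E eqxx.
have E2 : per w + per w = n by rewrite addnn.
have Hp := per_gt0 w.
case: q Hq => [|[|q]] Hq; lia.
Qed.

Lemma window w D : isper w D -> forall a, \sum_(i < D) W w (a + i) = \sum_(i < D) W w i.
Proof.
move=> Hp; elim=> [|a IH]; first by apply: eq_bigr => i _; rewrite add0n.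
case: D Hp IH => [|D] Hp IH; first by rewrite !big_ord0.
rewrite big_ord_recr /= -IH big_ord_recl /= addn0 addnC.
have -> : W w (a.+1 + D) = W w a by rewrite addSnnS (isperP Hp).
congr (_ + _); apply: eq_bigr => i _.
by rewrite /bump /= add1n addSnnS.
Qed.

Lemma par_add w (u : nat) : uu w -> par w (u + per w) = ~~ par w u.
Proof.
case/andP => _ Ho; rewrite /par big_split_ord /= window ?per_isper //.
by rewrite oddD -/(blk w) Ho addbT.
Qed.

Lemma tot_even w : uu w -> ~~ odd (\sum_(k < n) W w k).
Proof.
case/andP => /eqP E _; rewrite -E -addnn sum_dbl ?per_isper //.
by rewrite odd_double.
Qed.

Lemma par_tie w (u t : 'I_n) : good w -> eqIb w u t -> u != t ->
  uu w /\ par w t = ~~ par w u.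
Proof.
move=> Hg H; rewrite neq_ltn => /orP[Hut|Htu].
  by have [Hu E] := tie_uu Hg H Hut; rewrite E par_add.
have [Hu E] := tie_uu Hg (eqIb_sym H) Htu; rewrite E par_add //.
by rewrite negbK.
Qed.

Section Order.
Variables (w : {ffun 'I_n -> bool}) (c : bool).
Hypothesis Hg : good w.

Lemma ltc_irr u : ltc w c u u = false.
Proof. by rewrite /ltc twlt_irr eqxx andbF. Qed.

Lemma ltc_asym u t : ltc w c u t -> ~~ ltc w c t u.
Proof.
rewrite /ltc; case/orP => [H|].
  have Hn : ~~ eqIb w u t by apply/negP => /eqIb_twlt; rewrite H.
  rewrite (negbTE (twlt_asym H)) /=; apply/negP => /and3P[/eqIb_sym]; by rewrite (negbTE Hn).
case/and3P => Heq Hne Hc.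
rewrite eqIb_twlt ?(eqIb_sym Heq) //=.
have [_ ->] := par_tie Hg Heq Hne.
by move: Hc; case: c; case: (par w u); rewrite /= ?andbF.
Qed.

Lemma ltc_total u t : u != t -> ltc w c u t || ltc w c t u.
Proof.
move=> Hne; rewrite /ltc.
case E : (eqIb w u t).
  have [_ Hp] := par_tie Hg E Hne.
  by rewrite eqIb_sym // Hne eq_sym Hne Hp /=; case: c; case: (par w u); rewrite ?orbT.
case H1 : (twlt n (I w u) (I w t)) => //; case H2 : (twlt n (I w t) (I w u)) => //.
have := twlt_total (negbT H1) (negbT H2).
move=> Hall; move/negbT: E => /negP []; apply/forallP => k.
by have := Hall k (ltn_ord k); rewrite /I => ->.
Qed.

Lemma ltc_trans u t v : ltc w c u t -> ltc w c t v -> ltc w c u v.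
Proof.
move=> H1 H2.
have Huv : u != v.
  apply/negP => /eqP E; subst v; by rewrite (negbTE (ltc_asym H1)) in H2.
move: H1 H2; rewrite /ltc.
case/orP => [T1|/and3P[E1 N1 C1]]; case/orP => [T2|/and3P[E2 N2 C2]].
- by rewrite (twlt_trans T1 T2).
- rewrite (@twlt_ext n (I w u) (I w u) (I w v) (I w t)) ?T1 // => k _.
  by rewrite /I (eqIb_all E2).
- rewrite -(@twlt_ext n (I w t) (I w u) (I w v) (I w v)) ?T2 // => k _.
  by rewrite /I (eqIb_all E1).
- exfalso.
  have E3 : eqIb w u v.
    by apply/forallP => k; rewrite (eqIb_all E1) (eqIb_all E2).
  have [_ P1] := par_tie Hg E1 N1.
  have [_ P2] := par_tie Hg E2 N2.
  have [_ P3] := par_tie Hg E3 Huv.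
  by move: P3; rewrite P2 P1 negbK; case: (par w u).
Qed.

End Order.

Lemma twlt_unfold L a b : twlt L.+1 a b =
  if a 0 == b 0 then
      (if a 0 then twlt L (fun k => b k.+1) (fun k => a k.+1)
       else twlt L (fun k => a k.+1) (fun k => b k.+1))
  else b 0.
Proof. by []. Qed.

Lemma twlt_first L a b : a 0 != b 0 -> twlt L.+1 a b = b 0.
Proof. by move=> H /=; rewrite (negbTE H). Qed.

Definition rank w c (t : 'I_n) := #|[set u | ltc w c u t]|.

Lemma rank_ltn w c t : rank w c t < n.
Proof.
rewrite /rank; have := @proper_card _ [set u | ltc w c u t] [set: 'I_n].
rewrite cardsT card_ord; apply; apply/properP; split; first exact: subsetT.
by exists t; rewrite ?inE ?ltc_irr.
Qed.

Definition rk w c t : 'I_n := Ordinal (rank_ltn w c t).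

Definition sc (t : 'I_n) : 'I_n := inord (t.+1 %% n).

Lemma sc_val t : (sc t : nat) = t.+1 %% n.
Proof. by rewrite inordK // ltn_mod. Qed.

Lemma sc_inj : injective sc.
Proof.
move=> u t /(congr1 (@nat_of_ord n)); rewrite !sc_val => /eqP.
rewrite -[u.+1]addn1 -[t.+1]addn1 eqn_modDr !modn_small // => /eqP E; exact: val_inj.
Qed.

Definition scP : {perm 'I_n} := perm sc_inj.

Lemma scPE t : scP t = sc t.
Proof. by rewrite permE. Qed.

Lemma I0 w (u : 'I_n) : I w u 0 = w u.
Proof. by rewrite /I addn0 W_ord. Qed.

Lemma I_sc w (u : 'I_n) k : I w (sc u) k = I w u k.+1.
Proof. by rewrite /I sc_val -W_mod modnDml W_mod addSnnS. Qed.

Lemma par_sc w t : ~~ odd (\sum_(k < n) W w k) -> par w (sc t) = par w t (+) w t.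
Proof.
move=> He; rewrite sc_val.
have E : par w t.+1 = par w t (+) w t.
  by rewrite /par big_ord_recr /= oddD oddb W_ord.
case: (ltnP t.+1 n) => H; first by rewrite modn_small.
have Ht : t.+1 = n by apply/eqP; rewrite eqn_leq H ltn_ord.
by rewrite -E Ht modnn /par big_ord0 /= (negbTE He).
Qed.

Section Constr.
Variables (w : {ffun 'I_n -> bool}) (c : bool).
Hypothesis Hg : good w.

Lemma rank_lt u t : ltc w c u t -> rank w c u < rank w c t.
Proof.
move=> H; apply: proper_card; apply/properP; split.
  by apply/subsetP => v; rewrite !inE => Hv; exact: (ltc_trans Hg Hv H).
by exists u; rewrite !inE ?ltc_irr.
Qed.

Lemma rk_inj : injective (rk w c).
Proof.
move=> u t /(congr1 (@nat_of_ord n)) /= E; apply/eqP; apply: contraT => Hne.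
by case/orP: (ltc_total c Hg Hne) => /rank_lt; rewrite E ltnn.
Qed.

Definition sigma : {perm 'I_n} := perm rk_inj.

Lemma sigmaE t : (sigma t : nat) = rank w c t.
Proof. by rewrite permE. Qed.

Lemma sigma_lt u t : (sigma u < sigma t) = ltc w c u t.
Proof.
rewrite !sigmaE; apply/idP/idP => [H|/rank_lt //].
case: (eqVneq u t) => [E|Hne]; first by rewrite E ltnn in H.
case/orP: (ltc_total c Hg Hne) => // /rank_lt; lia.
Qed.

Definition sP : {perm 'I_n} := (sigma^-1 * scP * sigma)%g.

Lemma sP_sigma t : sP (sigma t) = sigma (sc t).
Proof. by rewrite /sP !permM permK scPE. Qed.

Lemma sP_iter k : (sP ^+ k)%g (sigma ord0) = sigma (inord (k %% n)).
Proof.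
elim: k => [|k IH].
  by rewrite expg0 perm1 mod0n; congr (sigma _); apply: ord_inj; rewrite /= inordK.
rewrite expgSr permM IH sP_sigma; congr (sigma _); apply: ord_inj.
by rewrite sc_val !inordK ?ltn_mod // -[(k %% n).+1]addn1 -[k.+1]addn1 modnDml.
Qed.

Lemma sP_cyc : cyclic_perm sP.
Proof.
apply: (@cyc_fromP _ (sigma ord0)) => y; apply/porbitP.
exists (sigma^-1%g y); rewrite sP_iter modn_small //.
by rewrite inord_val permKV.
Qed.

Lemma ltc_letter u t : ~~ w u -> w t -> ltc w c u t.
Proof.
move=> Hu Ht; rewrite /ltc twlt_first ?I0 ?Ht //.
by move: Hu Ht; case: (w u); case: (w t).
Qed.

Lemma rank_letter t : (rank w c t < zeros w) = ~~ w t.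
Proof.
case Ht : (w t) => /=.
  apply/negbTE; rewrite -leqNgt; apply: subset_leq_card; apply/subsetP => u.
  by rewrite !inE => Hu; apply: ltc_letter.
have Hz : t \in [set k | ~~ w k] by rewrite inE Ht.
rewrite /zeros (cardsD1 t) Hz add1n ltnS.
apply: subset_leq_card; apply/subsetP => u; rewrite !inE => Hu.
have -> : u != t by apply/negP => /eqP E; rewrite E ltc_irr in Hu.
apply/negP => Hwu; have := ltc_asym Hg (ltc_letter (negbT Ht) Hwu).
by rewrite Hu.
Qed.

Lemma twlt_shift u t : w u = w t ->
  twlt n (I w (sc u)) (I w (sc t)) =
  twlt m (fun k => I w u k.+1) (fun k => I w t k.+1).
Proof.
move=> E; rewrite twlt_S; last by rewrite !I_sc /I !W_n !W_ord.
by apply: twlt_ext => k _; rewrite I_sc.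
Qed.

Lemma tie_shift u t : eqIb w u t -> eqIb w (sc u) (sc t).
Proof.
move=> H; apply/forallP => k.
have E1 := I_sc w u k; have E2 := I_sc w t k; rewrite /I in E1 E2.
by rewrite E1 E2 (eqIb_all H) eqxx.
Qed.

Lemma ltc_shift0 u t : ltc w c u t -> ~~ w u -> ~~ w t -> ltc w c (sc u) (sc t).
Proof.
move=> H Hu Ht; rewrite /ltc twlt_shift; last by move: Hu Ht; case: (w u); case: (w t).
case/orP: H => [H|/and3P[E Ne C]].
  by move: H; rewrite twlt_unfold !I0 (negbTE Hu) (negbTE Ht) eqxx => ->.
apply/orP; right; rewrite tie_shift // (inj_eq sc_inj) Ne /=.
have [Huu _] := par_tie Hg E Ne.
by rewrite par_sc ?tot_even // (negbTE Hu) addbF.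
Qed.

Lemma ltc_shift1 u t : ltc w c u t -> w u -> w t -> ltc w c (sc t) (sc u).
Proof.
move=> H Hu Ht; rewrite /ltc twlt_shift; last by rewrite Hu Ht.
case/orP: H => [H|/and3P[E Ne C]].
  by move: H; rewrite twlt_unfold !I0 Hu Ht eqxx => ->.
apply/orP; right; rewrite tie_shift; last exact: eqIb_sym E.
rewrite (inj_eq sc_inj) eq_sym Ne /=.
have [Huu Hp] := par_tie Hg E Ne.
by rewrite par_sc ?tot_even // Ht Hp addbT negbK.
Qed.

Lemma sP_unib : unib sP (zeros w).
Proof.
rewrite /unib; apply/forallP => j; apply/forallP => k; apply/implyP.
have [u ->] : exists u, j = sigma u by exists (sigma^-1%g j); rewrite permKV.
have [t ->] : exists t, k = sigma t by exists (sigma^-1%g k); rewrite permKV.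
rewrite !sP_sigma !sigma_lt !sigmaE => Hut.
apply/andP; split; apply/implyP => H.
  have Ht : ~~ w t by rewrite -rank_letter.
  have Hu : ~~ w u.
    rewrite -rank_letter; exact: (ltn_trans (rank_lt Hut) H).
  exact: ltc_shift0.
have Hu : w u by rewrite -[w u]negbK -rank_letter -leqNgt.
have Ht : w t.
  rewrite -[w t]negbK -rank_letter -leqNgt.
  exact: (leq_trans H (ltnW (rank_lt Hut))).
exact: ltc_shift1.
Qed.

Lemma sP_word : wordOf sP (zeros w) (sigma ord0) = w.
Proof.
apply/ffunP => k; rewrite ffunE sP_iter modn_small // inord_val sigmaE.
by rewrite leqNgt rank_letter negbK.
Qed.

End Constr.

Lemma Brec_gen s e p D : cyclic_perm s -> unib s e ->
  isper (wordOf s e p) D -> ~~ (n %| D) -> forall v,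
  ((s ^+ v)%g p < (s ^+ (v + D))%g p) =
  (p < (s ^+ D)%g p) (+) par (wordOf s e p) v.
Proof.
move=> Hc Hu Hp Hnd.
set w := wordOf s e p in Hp *.
have Hne : forall u, (s ^+ u)%g p != (s ^+ (u + D))%g p.
  move=> u; apply/negP => /eqP E.
  have E' : (s ^+ (u %% n))%g p = (s ^+ ((u + D) %% n))%g p by rewrite !cyc_expmod.
  have := cyc_inj Hc (ltn_mod u n) (ltn_mod (u + D) n) E'.
  move/eqP; rewrite -{1}[u]addn0 eqn_modDl mod0n eq_sym => /eqP H0.
  by move: Hnd; rewrite /dvdn H0.
have Hx : forall u, (e <= (s ^+ u)%g p) = W w u by move=> u; rewrite W_wordOf.
elim=> [|v IH]; first by rewrite expg0 perm1 add0n /par big_ord0 addbF.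
rewrite addSn !expgSr !permM (step1 Hu) //; last by rewrite !Hx (isperP Hp).
by rewrite IH Hx /par big_ord_recr /= oddD oddb addbA.
Qed.

Section Uniq.
Variables (w : {ffun 'I_n -> bool}) (Hg : good w).
Variables (s : {perm 'I_n}) (e : nat) (p : 'I_n).
Hypotheses (Hc : cyclic_perm s) (Hu : unib s e) (Hw : wordOf s e p = w).

Let c := p < (s ^+ per w)%g p.

Lemma itin_W (u k : nat) : itin s e ((s ^+ u)%g p) k = W w (u + k).
Proof. by rewrite itin_word // Hw. Qed.

Lemma x_ltc (u t : 'I_n) : (s ^+ u)%g p < (s ^+ t)%g p -> ltc w c u t.
Proof.
move=> H; have Hne : u != t by apply/negP => /eqP E; rewrite E ltnn in H.
case: (lemA Hu n H) => [T|A].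
  rewrite /ltc (@twlt_ext n _ (itin s e ((s ^+ u)%g p)) _ (itin s e ((s ^+ t)%g p))) ?T //.
    by move=> k _; rewrite itin_W.
  by move=> k _; rewrite itin_W.
have E : eqIb w u t.
  by apply/forallP => k; rewrite -!itin_W A.
rewrite /ltc E Hne /=; apply/orP; right.
have [Huu Hpt] := par_tie Hg E Hne.
have Hd : ~~ (n %| per w).
  case/andP: Huu => /eqP E2 _; apply/negP => /dvdn_leq => /(_ (per_gt0 w)).
  rewrite -E2 -addnn; have := per_gt0 w; lia.
have HB := @Brec_gen s e p (per w) Hc Hu; rewrite Hw in HB; have HB' := HB (per_isper w) Hd.
case: (ltngtP u t) => Hut; last by move/ord_inj: Hut => Eut; rewrite Eut eqxx in Hne.
  have [_ Et] := tie_uu Hg E Hut.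
  by have := HB' u; rewrite -Et H.
have [_ Eu] := tie_uu Hg (eqIb_sym E) Hut.
have := HB' t; rewrite -Eu.
have -> : ((s ^+ t)%g p < (s ^+ u)%g p) = false by apply/negbTE; rewrite -leqNgt ltnW.
rewrite -/c Eu par_add // => /esym; by case: c; case: (par w t).
Qed.

Lemma x_ltcE (u t : 'I_n) : ltc w c u t = ((s ^+ u)%g p < (s ^+ t)%g p).
Proof.
apply/idP/idP => [H|/x_ltc //].
case: (eqVneq u t) => [E|Hne]; first by rewrite E ltc_irr in H.
case: (ltngtP ((s ^+ u)%g p) ((s ^+ t)%g p)) => // [Hgt|Heq].
  by have := x_ltc Hgt; rewrite (negbTE (ltc_asym Hg H)).
move/ord_inj: Heq => /(cyc_inj Hc (ltn_ord u) (ltn_ord t)) /ord_inj E.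
by rewrite E eqxx in Hne.
Qed.

Lemma sigma_x (t : 'I_n) : sigma c Hg t = (s ^+ t)%g p.
Proof.
apply: ord_inj; rewrite sigmaE /rank.
rewrite -[RHS](card_ltperm (orbP p Hc) (ltnW (ltn_ord ((s ^+ t)%g p)))).
by apply: eq_card => u; rewrite !inE x_ltcE orbPE.
Qed.

Lemma uniq_fiber : s = sP c Hg /\ p = sigma c Hg ord0.
Proof.
split; last by rewrite sigma_x expg0 perm1.
apply/permP => y.
have [t ->] : exists t, y = sigma c Hg t by exists ((sigma c Hg)^-1%g y); rewrite permKV.
rewrite sP_sigma !sigma_x sc_val cyc_expmod // -permM -expgSr //.
Qed.

End Uniq.

Definition fib e w := [set sp : {perm 'I_n} * 'I_n |
  [&& cyclic_perm sp.1, unib sp.1 e & wordOf sp.1 e sp.2 == w]].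

Lemma fib_empty e w : (forall s p, cyclic_perm s -> unib s e -> wordOf s e p = w -> False) ->
  #|fib e w| = 0.
Proof.
move=> H; apply/eqP; rewrite eqn0Ngt card_gt0; apply/negP => /set0Pn[[s p]].
by rewrite inE /= => /and3P[Hc Hu /eqP Hw]; apply: (H s p).
Qed.

Lemma pair_c w (Hg : good w) b : uu w ->
  (sigma b Hg ord0 < (sP b Hg ^+ per w)%g (sigma b Hg ord0)) = b.
Proof.
move=> Huu; rewrite sP_iter.
have Hlt : per w < n by case/andP: Huu => /eqP E _; rewrite -E -addnn; have := per_gt0 w; lia.
set x := inord (per w %% n).
have Hx : (x : nat) = per w by rewrite inordK ?ltn_mod // modn_small.
rewrite sigma_lt /ltc.
have E : eqIb w ord0 x.
  apply/forallP => k; rewrite Hx /= add0n addnC (isperP (per_isper w)) eqxx //.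
rewrite eqIb_twlt // E /=.
have -> : ord0 != x by rewrite -val_eqE /= Hx eq_sym -lt0n per_gt0.
by rewrite /par big_ord0 addbF.
Qed.

Lemma card_fib e w : e <= n -> #|fib e w| = (zeros w == e) * g w.
Proof.
move=> He; case: eqP => [Ez|Nz]; last first.
  rewrite mul0n; apply: fib_empty => s p Hc Hu Hw; apply: Nz.
  by rewrite -Hw zeros_word.
subst e; rewrite mul1n.
case Hg : (good w); last first.
  have -> : g w = 0 by move: Hg; rewrite /good /g; case: (per w == n) => //; case: (uu w).
  apply: fib_empty => s p Hc Hu Hw.
  by have := good_of p Hc Hu; rewrite Hw Hg.
pose pr b := (sP b Hg, sigma b Hg ord0).
have Hmem : forall b, pr b \in fib (zeros w) w.
  by move=> b; rewrite inE /= sP_cyc sP_unib sP_word eqxx.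
have Hall : forall sp, sp \in fib (zeros w) w ->
    sp = pr (sp.2 < (sp.1 ^+ per w)%g sp.2).
  move=> [s p]; rewrite inE /= => /and3P[Hc Hu /eqP Hw].
  by have [E1 E2] := uniq_fiber Hg Hc Hu Hw; rewrite /pr -E1 -E2.
rewrite /g; case Hp : (per w == n).
  have -> : fib (zeros w) w = [set pr false].
    apply/setP => sp; rewrite [in RHS]inE; apply/idP/eqP => [H|->]; last exact: Hmem.
    rewrite (Hall _ H) (eqP Hp).
    by move: H; rewrite inE => /and3P[Hc _ _]; rewrite cyc_expn // ltnn.
  by rewrite cards1.
have Huu : uu w by have := Hg; rewrite /good Hp.
rewrite Huu.
have -> : fib (zeros w) w = [set pr true; pr false].
  apply/setP => sp; apply/idP/idP => [H|].
    by rewrite (Hall _ H) !inE; case: (_ < _); rewrite eqxx ?orbT.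
  by rewrite in_set2 => /orP[/eqP ->|/eqP ->]; exact: Hmem.
rewrite cards2; suff -> : pr true != pr false by [].
apply/eqP; rewrite /pr => -[E1 E2].
by have := pair_c Hg true Huu; rewrite E1 E2 pair_c.
Qed.

Definition Sset e := [set sp : {perm 'I_n} * 'I_n | cyclic_perm sp.1 && unib sp.1 e].
Definition Aset e := [set s : {perm 'I_n} | cyclic_perm s && unib s e].

Lemma card_S e : #|Sset e| = #|Aset e| * n.
Proof.
have -> : Sset e = setX (Aset e) [set: 'I_n].
  by apply/setP => -[s p]; rewrite !inE andbT.
by rewrite cardsX cardsT card_ord.
Qed.

Lemma card_S_sum e : #|Sset e| = \sum_(w : {ffun 'I_n -> bool}) #|fib e w|.
Proof.
rewrite -sum1_card (partition_big (fun sp => wordOf sp.1 e sp.2) predT) //=.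
apply: eq_bigr => w _; rewrite -sum1_card; apply: eq_bigl => sp.
by rewrite !inE andbA.
Qed.

Lemma sum_sym e : n %% 4 != 2 -> e <= n ->
  \sum_(w : {ffun 'I_n -> bool}) (zeros w == e) * g w =
  \sum_(w : {ffun 'I_n -> bool}) (zeros w == n - e) * g w.
Proof.
move=> Hn He; rewrite (reindex_inj (inv_inj negwK)) /=.
apply: eq_bigr => w _; rewrite zeros_neg g_neg //; congr (_ * _).
have := zeros_le w; move=> Hz.
by apply/eqP/eqP; lia.
Qed.

Lemma Aset_sym e : n %% 4 != 2 -> e <= n -> #|Aset e| = #|Aset (n - e)|.
Proof.
move=> Hn He; apply/eqP; rewrite -(eqn_pmul2r (ltn0Sn m)) -!card_S !card_S_sum.
rewrite (eq_bigr (fun w => (zeros w == e) * g w)); last by move=> w _; rewrite card_fib.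
rewrite [X in _ == X](eq_bigr (fun w => (zeros w == n - e) * g w)); last first.
  by move=> w _; rewrite card_fib // leq_subr.
by rewrite sum_sym.
Qed.

Definition Lp (q : nat) := [set s : {perm 'I_n} | [&& cyclic_perm s, unimodal s &
       [exists j : 'I_n, (val j == q) && (val (s j) == n.-1)]]].

Lemma peakE s q : [exists j : 'I_n, (val j == q) && (val (s j) == n.-1)] =
  ((s^-1)%g ord_max == q :> nat).
Proof.
apply/existsP/eqP => [[j /andP[/eqP <- /eqP Hj]]|Hq].
  by congr val; apply: (@perm_inj _ s); rewrite permKV; apply: ord_inj.
by exists ((s^-1)%g ord_max); rewrite /= Hq eqxx permKV /=.
Qed.

Lemma uni_peak s e : unib s e -> e <= n ->
  let q := ((s^-1)%g ord_max : nat) in (q == e) || (q.+1 == e).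
Proof.
move=> Hu He /=; set q := (s^-1)%g ord_max.
have Hsq : s q = ord_max by rewrite permKV.
have Hmax : forall x, (s x : nat) <= m by move=> x; rewrite -ltnS.
case: (ltngtP q e) => H; last by rewrite ?orbT.
  case: (ltngtP q.+1 e) => H2; last by rewrite ?orbT.
    have Hq1 : q.+1 < n by apply: leq_trans H2 He.
    have [/(_ H2) H3 _] := unibP (j := q) (k := Ordinal Hq1) Hu (ltnSn q).
    by move: H3; rewrite Hsq /=; have := Hmax (Ordinal Hq1); lia.
  lia.
have Hq0 : q.-1 < n by have := ltn_ord q; lia.
have Hlt : Ordinal Hq0 < q by rewrite /=; lia.
have [_ /(_ _) H3] := unibP Hu Hlt.
by move: (H3 ltac:(rewrite /=; lia)); rewrite Hsq /=; have := Hmax (Ordinal Hq0); lia.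
Qed.

Lemma peak_uni s e0 e : unib s e0 -> e <= n ->
  let q := ((s^-1)%g ord_max : nat) in (q == e) || (q.+1 == e) -> unib s e.
Proof.
move=> Hu0 He /=; set q := (s^-1)%g ord_max => Hq.
have Hsq : s q = ord_max by rewrite permKV.
have Hmax : forall x, x != q -> (s x : nat) < m.
  move=> x Hx; have : s x != s q by rewrite (inj_eq perm_inj).
  by rewrite Hsq -val_eqE /= => Hne; have := ltn_ord (s x); lia.
apply/forallP => j; apply/forallP => k; apply/implyP => Hjk.
have [H1 H2] := unibP Hu0 Hjk.
apply/andP; split; apply/implyP => Hk.
  case: (ltnP k e0) => Hke0; first exact: H1.
  case: (eqVneq k q) => Ekq.
    rewrite Ekq Hsq /=; apply: Hmax; apply/negP => /eqP Ejq.
    by move: Hjk; rewrite Ejq Ekq ltnn.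
  exfalso.
  have Hkq : k < q by move: Hq Hk Ekq; rewrite -val_eqE /=; lia.
  have [_ /(_ (leq_trans Hke0 (leqnn k))) H3] := unibP Hu0 Hkq.
  by move: H3; rewrite Hsq /=; have := Hmax k Ekq; lia.
case: (leqP e0 j) => Hje0; first exact: H2.
case: (eqVneq j q) => Ejq.
  rewrite Ejq Hsq /=; apply: Hmax; apply/negP => /eqP Ekq.
  by move: Hjk; rewrite Ejq Ekq ltnn.
exfalso.
have Hqj : q < j by move: Hq Hk Ejq; rewrite -val_eqE /=; lia.
have [/(_ Hje0) H3 _] := unibP Hu0 Hqj.
by move: H3; rewrite Hsq /=; have := Hmax j Ejq; lia.
Qed.

Lemma mem_Aset s e : e <= n -> (s \in Aset e) =
  [&& cyclic_perm s, unimodal s &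
     (((s^-1)%g ord_max : nat) == e) || (((s^-1)%g ord_max : nat).+1 == e)].
Proof.
move=> He; rewrite inE; apply/andP/and3P => [[Hc Hu]|[Hc Hun Hq]]; split => //.
- rewrite unimodalE; apply/existsP; exists (Ordinal (He : e < n.+1)); exact: Hu.
- exact: uni_peak.
- move: Hun; rewrite unimodalE => /existsP[e0 Hu0]; exact: peak_uni Hu0 He Hq.
Qed.

Lemma Lp_n : #|Lp n| = 0.
Proof.
apply/eqP; rewrite eqn0Ngt card_gt0; apply/negP => /set0Pn[s].
by rewrite inE peakE => /and3P[_ _ /eqP H]; have := ltn_ord ((s^-1)%g ord_max); rewrite H ltnn.
Qed.

Lemma Aset_split e : e <= n ->
  #|Aset e| = (if e is e'.+1 then #|Lp e'| else 0) + #|Lp e|.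
Proof.
move=> He; case: e He => [|e'] He.
  rewrite add0n; apply: eq_card => s; rewrite mem_Aset // inE peakE.
  by case: (_ == 0).
have -> : Aset e'.+1 = Lp e' :|: Lp e'.+1.
  apply/setP => s; rewrite mem_Aset // !inE !peakE eqSS.
  by case: (cyclic_perm s); case: (unimodal s); rewrite //= orbC.
rewrite cardsU.
have -> : #|Lp e' :&: Lp e'.+1| = 0.
  apply/eqP; rewrite eqn0Ngt card_gt0; apply/negP => /set0Pn[s].
  rewrite !inE !peakE => /andP[/and3P[_ _ /eqP H1] /and3P[_ _ /eqP H2]].
  by move: H2; rewrite H1; lia.
by rewrite subn0.
Qed.

Lemma Lp_sym q : n %% 4 != 2 -> q <= m -> #|Lp q| = #|Lp (m - q)|.
Proof.
move=> Hn; elim: q => [|q IH] Hq.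
  have := Aset_sym Hn (leq0n n); rewrite subn0 (Aset_split (leq0n n)) Aset_split //.
  by rewrite Lp_n subn0 add0n addn0.
have IH' := IH (ltnW Hq).
have Hq' : q.+1 <= n by lia.
have H1 := Aset_sym Hn Hq'.
rewrite (Aset_split Hq') in H1.
have E : n - q.+1 = (m - q.+1).+1 by lia.
rewrite E Aset_split in H1; last by lia.
have E2 : (m - q.+1).+1 = m - q by lia.
rewrite E2 -IH' in H1.
by move: H1; lia.
Qed.

Lemma main_m i : n %% 4 != 2 -> 1 <= i <= n -> Lambda n i = Lambda n (n - i + 1).
Proof.
move=> Hn /andP[H1 H2].
change (#|Lp i.-1| = #|Lp (n - i + 1).-1|).
rewrite Lp_sym //; last by lia.
by congr #|Lp _|; lia.
Qed.
End Cyc.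

Theorem lemma4p3 (n : nat) (hn : 1 <= n) (hmod : n %% 4 != 2) :
  forall i : nat, 1 <= i <= n -> Lambda n i = Lambda n (n - i + 1).
Proof.
case: n hn hmod => [//|m] _ hmod i Hi.
exact: main_m.
Qed.
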